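(* Under the setting of the context (with $\boldsymbol{Z}_a=[\boldsymbol{Z}_r\ \boldsymbol{Z}_u]$ of full column rank, $N_u\le N_r$, and arbitrary $\boldsymbol{w}_{\mathrm{init}}$, $\boldsymbol{y}_r$, $\boldsymbol{y}_u$), let $\boldsymbol{Z}_{r,\mathrm{sub}}\in\mathbb{R}^{D\times N_u}$ consist of $N_u$ columns of $\boldsymbol{Z}_r$ and $\boldsymbol{y}_{r,\mathrm{sub}}\in\mathbb{R}^{N_u}$ the corresponding entries of $\boldsymbol{y}_r$. Fix $c\in(0,1)$, set $\tilde{\boldsymbol{Z}}_u=(1-c)\boldsymbol{Z}_{r,\mathrm{sub}}+c\boldsymbol{Z}_u$, $\tilde{\boldsymbol{Z}}_a=[\boldsymbol{Z}_r\ \tilde{\boldsymbol{Z}}_u]$, $\tilde{\boldsymbol{y}}_a=[\boldsymbol{y}_r;\boldsymbol{y}_{r,\mathrm{sub}}]$, and define the unlearned model $\boldsymbol{w}_u=\boldsymbol{w}_p+\tilde{\boldsymbol{Z}}_a(\tilde{\boldsymbol{Z}}_a^\top\tilde{\boldsymbol{Z}}_a)^{-1}(\tilde{\boldsymbol{y}}_a-\tilde{\boldsymbol{Z}}_a^\top\boldsymbol{w}_p)$. Then $\tilde{\boldsymbol{Z}}_a^\top\tilde{\boldsymbol{Z}}_a$ is invertible and $$\boldsymbol{w}_r-\boldsymbol{w}_u=(\boldsymbol{I}_D-\boldsymbol{\Pi}_r)\boldsymbol{Z}_u\boldsymbol{M}\Big(\boldsymbol{K}_{ur}\boldsymbol{K}_{rr}^{-1}(\boldsymbol{y}_r-\boldsymbol{Z}_r^\top\boldsymbol{w}_{\mathrm{init}})+\boldsymbol{Z}_u^\top\boldsymbol{w}_{\mathrm{init}}-\boldsymbol{y}_{r,\mathrm{sub}}\Big);$$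 in particular $\boldsymbol{w}_r-\boldsymbol{w}_u$ does not depend on $c$.
   Context: Setting (over-parameterized linear model trained to interpolation / minimum-distance solutions). Given $\boldsymbol{Z}_r\in\mathbb{R}^{D\times N_r}$ (features of remaining data), $\boldsymbol{Z}_u\in\mathbb{R}^{D\times N_u}$ (features of forgetting data), with $\boldsymbol{Z}_a=[\boldsymbol{Z}_r\ \boldsymbol{Z}_u]$ of full column rank. Write $\boldsymbol{y}_a=[\boldsymbol{y}_r;\boldsymbol{y}_u]\in\mathbb{R}^{N_r+N_u}$ (original labels), $\boldsymbol{w}_{\mathrm{init}}\in\mathbb{R}^D$. Define $\boldsymbol{w}_p=\boldsymbol{w}_{\mathrm{init}}+\boldsymbol{Z}_a(\boldsymbol{Z}_a^\top\boldsymbol{Z}_a)^{-1}(\boldsymbol{y}_a-\boldsymbol{Z}_a^\top\boldsymbol{w}_{\mathrm{init}})$ (pre-trained model), $\boldsymbol{w}_r=\boldsymbol{w}_{\mathrm{init}}+\boldsymbol{Z}_r(\boldsymbol{Z}_r^\top\boldsymbol{Z}_r)^{-1}(\boldsymbol{y}_r-\boldsymbol{Z}_r^\top\boldsymbol{w}_{\mathrm{init}})$ (retrained model). Let $\boldsymbol{K}_{rr}=\boldsymbol{Z}_r^\top\boldsymbol{Z}_r$, $\boldsymbol{K}_{ru}=\boldsymbol{Z}_r^\top\boldsymbol{Z}_u$, $\boldsymbol{K}_{ur}=\boldsymbol{Z}_u^\top\boldsymbol{Z}_r$, $\boldsymbol{K}_{uu}=\boldsymbol{Z}_u^\top\boldsymbol{Z}_u$,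 $\boldsymbol{M}=(\boldsymbol{K}_{uu}-\boldsymbol{K}_{ur}\boldsymbol{K}_{rr}^{-1}\boldsymbol{K}_{ru})^{-1}$ (inverse of the Schur complement), and $\boldsymbol{\Pi}_r=\boldsymbol{Z}_r(\boldsymbol{Z}_r^\top\boldsymbol{Z}_r)^{-1}\boldsymbol{Z}_r^\top$. $\boldsymbol{I}_D$ is the $D\times D$ identity. *)

(* Defs.v *)
From mathcomp Require Import all_boot all_order all_algebra.
Set Implicit Arguments. Unset Strict Implicit. Unset Printing Implicit Defensive.
Import GRing.Theory Num.Theory.
Local Open Scope ring_scope.

Definition mdsol (R : fieldType) (D N : nat)
  (Z : 'M[R]_(D, N)) (y : 'cV[R]_N) (w0 : 'cV[R]_D) : 'cV[R]_D :=
  w0 + Z *m invmx (Z^T *m Z) *m (y - Z^T *m w0).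

(* Main.v *)
Require Import Defs.
From mathcomp Require Import all_boot all_order all_algebra.
Import GRing.Theory Num.Theory.
Local Open Scope ring_scope.

Lemma gram_unit (R : realFieldType) D N (Z : 'M[R]_(D, N)) :
  (forall x : 'cV_N, Z *m x = 0 -> x = 0) -> Z^T *m Z \in unitmx.
Proof.
move=> HZ; rewrite -row_free_unit -kermx_eq0.
apply/rowV0P => v /sub_kermxP vA.
have h1 : (Z *m v^T)^T *m (Z *m v^T) = 0.
  by rewrite trmx_mul trmxK mulmxA -(mulmxA v) vA mul0mx.
have h2 : Z *m v^T = 0.
  move: h1; move: (Z *m v^T) => x h1.
  apply/matrixP => i j; rewrite ord1 [RHS]mxE.
  have := congr1 (fun M : 'M[R]_1 => M 0 0) h1; rewrite /= !mxE.
  under eq_bigr do rewrite mxE.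
  move=> /psumr_eq0P H.
  have /eqP := H (fun k _ => sqr_ge0 (x k 0)) i isT.
  by rewrite -expr2 sqrf_eq0 => /eqP.
have := HZ _ h2 => /(congr1 trmx); rewrite trmxK => ->.
by rewrite linear0.
Qed.

Lemma mdC (R : fieldType) D N (Z : 'M[R]_(D, N)) x w v a :
  Z^T *m Z \in unitmx -> v = w + Z *m a -> Z^T *m v = x -> mdsol Z x w = v.
Proof.
move=> hK hv hx; rewrite /mdsol -hx hv mulmxDr addrAC subrr add0r.
by rewrite -!mulmxA (mulmxA Z^T) mulKmx.
Qed.

Lemma colsubE (R : pzSemiRingType) m n n' (g : 'I_n' -> 'I_n) (A : 'M[R]_(m, n)) :
  colsub g A = A *m colsub g 1%:M.
Proof. by rewrite mulmx_colsub mulmx1. Qed.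

Lemma rowsubE (R : pzSemiRingType) m n m' (g : 'I_m' -> 'I_m) (A : 'M[R]_(m, n)) :
  rowsub g A = (colsub g 1%:M)^T *m A.
Proof.
have -> : (colsub g (1%:M : 'M[R]_m))^T = rowsub g 1%:M.
  by apply/matrixP => i j; rewrite !mxE eq_sym.
by rewrite mul_rowsub_mx mul1mx.
Qed.

Arguments gram_unit {R D N Z}.
Arguments mdC {R D N Z x w v} a.

Theorem mainTheorem4 (R : realFieldType) (D Nr Nu : nat)
  (Zr : 'M[R]_(D, Nr)) (Zu : 'M[R]_(D, Nu))
  (yr : 'cV[R]_Nr) (yu : 'cV[R]_Nu) (winit : 'cV[R]_D)
  (s : 'I_Nu -> 'I_Nr) (c : R) :
  \rank (row_mx Zr Zu) = (Nr + Nu)%N ->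
  (Nu <= Nr)%N ->
  injective s ->
  0 < c < 1 ->
  let Za := row_mx Zr Zu in
  let ya := col_mx yr yu in
  let wp := mdsol Za ya winit in
  let wr := mdsol Zr yr winit in
  let Krr := Zr^T *m Zr in
  let Kru := Zr^T *m Zu in
  let Kur := Zu^T *m Zr in
  let Kuu := Zu^T *m Zu in
  let M := invmx (Kuu - Kur *m invmx Krr *m Kru) in
  let Pir := Zr *m invmx Krr *m Zr^T in
  let Zrsub := colsub s Zr in
  let yrsub := rowsub s yr in
  let tZu := (1 - c) *: Zrsub + c *: Zu in
  let tZa := row_mx Zr tZu in
  let tya := col_mx yr yrsub in
  let wu := mdsol tZa tya wp in
  (tZa^T *m tZa \in unitmx) /\
  wr - wu = (1%:M - Pir) *m Zu *m M *m
            (Kur *m invmx Krr *m (yr - Zr^T *m winit) + Zu^T *m winit - yrsub).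
Proof.
move=> hrank _ _ /andP[c0 c1] Za ya wp wr Krr Kru Kur Kuu M Pir Zrsub yrsub tZu tZa tya wu.
have injZa : forall x : 'cV_(Nr + Nu), Za *m x = 0 -> x = 0.
  have rf : row_free Za^T by rewrite /row_free mxrank_tr hrank.
  move=> x h; have hx : x^T = 0.
    by apply: (row_free_inj rf); rewrite /= mul0mx -trmx_mul h linear0.
  by rewrite -[x]trmxK hx linear0.
have hKa : Za^T *m Za \in unitmx := gram_unit injZa.
have hKrr : Krr \in unitmx.
  apply: gram_unit => x hx.
  have : Za *m col_mx x 0 = 0 by rewrite /Za mul_row_col hx mulmx0 addr0.
  by move/injZa/eqP; rewrite col_mx_eq0 => /andP[/eqP].
pose Q := invmx Krr.
pose Zt := Zu - Zr *m Q *m Kru.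
have hZt : (1%:M - Pir) *m Zu = Zt.
  by rewrite mulmxBl mul1mx /Pir /Zt -!mulmxA.
have ha : Zr^T *m Zt = 0.
  by rewrite /Zt mulmxBr !mulmxA (mulmxV hKrr) mul1mx subrr.
have hc : Zu^T *m Zt = Kuu - Kur *m Q *m Kru by rewrite /Zt mulmxBr !mulmxA.
have hS : Zt^T *m Zt = Kuu - Kur *m Q *m Kru.
  rewrite -hc.
  have -> : Zt^T = Zu^T - (Zr *m Q *m Kru)^T by rewrite /Zt linearB.
  rewrite mulmxBl [X in _ - X](_ : _ = 0) ?subr0 //.
  by rewrite !trmx_mul -!mulmxA ha !mulmx0.
have hSu : (Kuu - Kur *m Q *m Kru) \in unitmx.
  rewrite -hS; apply: gram_unit => x hx.
  have : Za *m col_mx (- (Q *m Kru *m x)) x = 0.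
    by rewrite /Za mul_row_col mulmxN !mulmxA addrC -(mulmxA _ Zr^T Zu) -mulmxBl.
  by move/injZa/eqP; rewrite col_mx_eq0 => /andP[_ /eqP].
have hb : Zr^T *m wr = yr.
  by rewrite /wr /mdsol mulmxDr !mulmxA (mulmxV hKrr) mul1mx addrC subrK.
have hd : Zu^T *m wr = Zu^T *m winit + Kur *m Q *m (yr - Zr^T *m winit).
  by rewrite /wr /mdsol mulmxDr !mulmxA.
pose e := Kur *m Q *m (yr - Zr^T *m winit) + Zu^T *m winit - yrsub.
pose wu' := wr - Zt *m M *m e.
have hx1 : Zr^T *m wu' = yr.
  by rewrite /wu' mulmxBr hb !mulmxA ha !mul0mx subr0.
have hx2 : Zu^T *m wu' = yrsub.
  rewrite /wu' mulmxBr hd !mulmxA hc (mulmxV hSu) mul1mx /e.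
  by rewrite (addrC (Zu^T *m winit)) opprB [LHS]addrC subrK.
pose Sel := colsub s (1%:M : 'M[R]_Nr).
have cn0 : c != 0 by rewrite lt0r_neq0.
have hg : forall d : 'cV_(Nr + Nu), Za *m d = tZa *m
    col_mx (usubmx d - ((1 - c) / c) *: (Sel *m dsubmx d)) (c^-1 *: dsubmx d).
  move=> d; rewrite -{1}(vsubmxK d) /Za /tZa !mul_row_col /tZu /Zrsub colsubE.
  rewrite mulmxBr mulmxDl -!scalemxAl -!scalemxAr !scalerA mulfV // scale1r.
  by rewrite -/Sel !mulmxA addrA subrK.
have htK : tZa^T *m tZa \in unitmx.
  apply: gram_unit => x hx.
  pose d' := col_mx (usubmx x + (1 - c) *: (Sel *m dsubmx x)) (c *: dsubmx x).
  have hd' : Za *m d' = 0.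
    rewrite hg col_mxKu col_mxKd -scalemxAr !scalerA divfK // mulVf // scale1r.
    by rewrite addrK vsubmxK.
  move/injZa/eqP: hd'; rewrite col_mx_eq0 => /andP[/eqP h1 /eqP h2].
  move: h2 => /eqP; rewrite scaler_eq0 (negbTE cn0) /= => /eqP h2.
  move: h1; rewrite h2 mulmx0 scaler0 addr0 => h1.
  by rewrite -(vsubmxK x) h1 h2 col_mx0.
have hTx : tZa^T *m wu' = tya.
  have trZ : forall a (A : 'M[R]_(D, Nu)), (a *: A)^T = a *: A^T.
    by move=> a A; apply/matrixP=> i j; rewrite !mxE.
  have trD : forall (A B : 'M[R]_(D, Nu)), (A + B)^T = A^T + B^T.
    by move=> A B; apply/matrixP=> i j; rewrite !mxE.
  rewrite tr_row_mx mul_col_mx hx1 /tZu trD !trZ mulmxDl -!scalemxAl.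
  rewrite hx2 /Zrsub colsubE trmx_mul -mulmxA hx1 -rowsubE -/yrsub.
  by rewrite -scalerDl subrK scale1r; reflexivity.
pose b := col_mx (Q *m (yr - Zr^T *m winit) + Q *m Kru *m M *m e) (- (M *m e)).
have hwb : wu' = winit + Za *m b.
  rewrite /Za mul_row_col mulmxN mulmxDr /wu' /wr /mdsol /Zt !mulmxBl.
  by rewrite opprB -!mulmxA !addrA.
have hwp : wp = winit + Za *m (invmx (Za^T *m Za) *m (ya - Za^T *m winit)).
  by rewrite /wp /mdsol mulmxA.
split => //.
have -> : wu = wu'.
  apply: (mdC (col_mx (usubmx (b - invmx (Za^T *m Za) *m (ya - Za^T *m winit)) -
     ((1 - c) / c) *: (Sel *m dsubmx (b - invmx (Za^T *m Za) *m (ya - Za^T *m winit))))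
     (c^-1 *: dsubmx (b - invmx (Za^T *m Za) *m (ya - Za^T *m winit))))) => //.
  by rewrite -hg mulmxBr hwp hwb -addrA [_ + (_ - _)]addrC subrK.
by rewrite /wu' opprB addrC subrK -hZt.
Qed.
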